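(* Let $R\ge1$, $\mathbf{x}=(x_1,\dots,x_R)$ pairwise distinct reals and $\mathbf{c}=(c_1,\dots,c_R)\in\mathbb{R}^R$. (a) If $\mathbf{u}=(u_1,\dots,u_R)^T\in\mathbb{C}^R$ is an eigenvector of $A(\mathbf{x})$ for the eigenvalue $i\mu$ ($\mu\in\mathbb{R}$), then for every $1\le n\le R$, $$\mu^2|u_n|^2=\sum_{m=1}^R a_{m,n}^2\big(|u_m|^2+2\,\Re(u_n\overline{u_m})\big).$$ (b) If $\mathbf{u}\in\mathbb{C}^R$ is an eigenvector of $B(\mathbf{x},\mathbf{c})$ for the eigenvalue $i\mu$ ($\mu\in\mathbb{R}$), then for every $1\le n\le R$, $$\mu^2|u_n|^2=\sum_{m=1}^R a_{m,n}^2\big(c_n^2c_m^2|u_m|^2+2\,c_n^3c_m\,\Re(u_n\overline{u_m})\big).$$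
   Context: $A(\mathbf{x})$ is the $R\times R$ matrix with entries $a_{m,m}=0$ and $a_{m,n}=\frac{1}{x_m-x_n}$ for $m\ne n$. $B(\mathbf{x},\mathbf{c})$ is the $R\times R$ matrix with entries $b_{m,n}=c_mc_na_{m,n}$. Both matrices are real antisymmetric, so their eigenvalues are purely imaginary. *)

(* Defs.v *)
(* Complex numbers: an arbitrary numClosedFieldType C
   (e.g. algC); "real" means x \is Num.real. *)
From HB Require Import structures.
From mathcomp Require Import all_boot all_order all_algebra.
Set Implicit Arguments. Unset Strict Implicit. Unset Printing Implicit Defensive.
Import Order.TTheory GRing.Theory Num.Theory.
Local Open Scope ring_scope.

Definition matA (C : numClosedFieldType) (R : nat) (x : 'I_R -> C) : 'M[C]_R :=
  \matrix_(m < R, n < R) (if m == n then 0 else (x m - x n)^-1).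

Definition matB (C : numClosedFieldType) (R : nat) (x c : 'I_R -> C) : 'M[C]_R :=
  \matrix_(m < R, n < R) (c m * c n * matA x m n).

Definition is_eigenvector (C : numClosedFieldType) (R : nat)
  (M : 'M[C]_R) (u : 'cV[C]_R) (lam : C) : Prop :=
  u != 0 /\ M *m u = lam *: u.

(* Main.v *)
Require Import Defs.
From HB Require Import structures.
From mathcomp Require Import all_boot all_order all_algebra.
From mathcomp Require Import ring.
Import Order.TTheory GRing.Theory Num.Theory.
Local Open Scope ring_scope.

Section K.
Variables (C : numClosedFieldType) (R : nat) (x : 'I_R -> C).
Hypothesis hxr : forall i, x i \is Num.real.
Hypothesis hinj : injective x.

Local Notation a := (matA x).

Lemma aE m k : a m k = if m == k then 0 else (x m - x k)^-1.
Proof. by rewrite mxE. Qed.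

Lemma a_real m k : a m k \is Num.real.
Proof. rewrite aE; case: eqP => _; first exact: real0.
by rewrite realV realB. Qed.

Lemma a_anti m k : a m k = - a k m.
Proof. rewrite !aE eq_sym; case: eqP => _; first by rewrite oppr0.
by rewrite -invrN opprB. Qed.

Lemma xsub m k : m != k -> x m - x k != 0.
Proof. move=> h; rewrite subr_eq0; apply/eqP => /hinj /eqP; exact/negP. Qed.

Lemma ident n m k : a n m * a n k =
  a m k * (a n m - a n k) + (m == k)%:R * a n m ^+ 2
  + (k == n)%:R * a n m ^+ 2 + (m == n)%:R * a n k ^+ 2.
Proof.
rewrite !aE.
have [->|hmk] := eqVneq m k.
  rewrite (eq_sym k n).
  case: eqP => hkn; rewrite ?mul0r ?mul1r; ring.
have hkm : k != m by rewrite eq_sym.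
have [ekn|hkn] := eqVneq k n.
  subst k.
  rewrite ?eqxx ?(negPf hmk) ?(negPf hkm) /= -[(x m - x n)^-1]opprK -invrN opprB.
  ring.
have hnk : n != k by rewrite eq_sym.
have [emn|hmn] := eqVneq m n.
  subst m.
  rewrite ?eqxx ?(negPf hnk) ?(negPf hkn) /= -[(x n - x k)^-1]opprK -invrN opprB. ring.
have hnm : n != m by rewrite eq_sym.
rewrite ?(negPf hnk) ?(negPf hkn) ?(negPf hnm) ?(negPf hmn) /=.
have h1 := @xsub m k hmk.
have h4 := @xsub n m hnm.
have h5 := @xsub n k hnk.
field.
by rewrite h1 h4 h5.
Qed.

Lemma sum_ind (j : 'I_R) (F : 'I_R -> C) : \sum_(k < R) (k == j)%:R * F k = F j.
Proof.
rewrite (bigD1 j) //= eqxx mul1r big1 ?addr0 // => k /negPf ->; by rewrite mul0r.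
Qed.

Lemma sum_ind' (j : 'I_R) (F : 'I_R -> C) : \sum_(k < R) (j == k)%:R * F k = F j.
Proof. rewrite -[RHS](sum_ind j F); apply: eq_bigr => k _; by rewrite eq_sym. Qed.

Lemma dsum_diag (F : 'I_R -> 'I_R -> C) :
  \sum_(i < R) \sum_(k < R) (i == k)%:R * F i k = \sum_(i < R) F i i.
Proof. apply: eq_bigr => i _; exact: sum_ind'. Qed.
Lemma dsum_col (F : 'I_R -> 'I_R -> C) j :
  \sum_(i < R) \sum_(k < R) (k == j)%:R * F i k = \sum_(i < R) F i j.
Proof. apply: eq_bigr => i _; exact: sum_ind. Qed.
Lemma dsum_row (F : 'I_R -> 'I_R -> C) j :
  \sum_(i < R) \sum_(k < R) (i == j)%:R * F i k = \sum_(k < R) F j k.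
Proof. rewrite exchange_big /=; apply: eq_bigr => k _; exact: (sum_ind j (F^~ k)). Qed.

Lemma main (c : 'I_R -> C) (U Ub : 'I_R -> C) n :
  let W m := \sum_(k < R) a m k * (c k * U k) in
  let Wb m := \sum_(k < R) a m k * (c k * Ub k) in
  W n * Wb n = \sum_(m < R) a n m * U m * (c m * Wb m)
             + \sum_(m < R) a n m * Ub m * (c m * W m)
             + \sum_(m < R) a n m ^+ 2 * (c m ^+ 2 * U m * Ub m
                   + c n * c m * (U n * Ub m + Ub n * U m)).
Proof.
move=> W Wb.
have -> : W n * Wb n = \sum_(m < R) (
   \sum_(k < R) (a n m * (c m * U m) * (a m k * (c k * Ub k)))
 - \sum_(k < R) (a n k * (c k * Ub k) * (a m k * (c m * U m)))
 + \sum_(k < R) (m == k)%:R * (a n m ^+ 2 * (c m * U m) * (c k * Ub k))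
 + \sum_(k < R) (k == n)%:R * (a n m ^+ 2 * (c m * U m) * (c k * Ub k))
 + \sum_(k < R) (m == n)%:R * (a n k ^+ 2 * (c m * U m) * (c k * Ub k))).
  rewrite /W /Wb mulr_suml; apply: eq_bigr => m _.
  rewrite mulr_sumr -sumrB -!big_split /=; apply: eq_bigr => k _.
  rewrite (_ : _ * _ = (a n m * a n k) * ((c m * U m) * (c k * Ub k))); last by ring.
  rewrite ident; ring.
rewrite !big_split /= sumrN.
have -> : \sum_(m < R) \sum_(k < R) (a n m * (c m * U m) * (a m k * (c k * Ub k)))
   = \sum_(m < R) a n m * U m * (c m * Wb m).
  apply: eq_bigr => m _; rewrite -mulr_sumr /Wb; ring.
have -> : \sum_(m < R) \sum_(k < R) (a n k * (c k * Ub k) * (a m k * (c m * U m)))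
   = - \sum_(m < R) a n m * Ub m * (c m * W m).
  rewrite exchange_big /= -sumrN; apply: eq_bigr => k _; rewrite -mulr_sumr /W.
  rewrite (eq_bigr (fun m => - (a k m * (c m * U m)))); last first.
    by move=> m _; rewrite a_anti mulNr.
  rewrite sumrN; ring.
rewrite opprK.
rewrite dsum_diag dsum_col dsum_row.
rewrite -!addrA; congr (_ + (_ + _)).
rewrite -!big_split /=; apply: eq_bigr => m _; ring.
Qed.

Lemma main2 (c U Ub : 'I_R -> C) mu n
  (h1 : forall m, c m * (\sum_(k < R) a m k * (c k * U k)) = 'i * mu * U m)
  (h2 : forall m, c m * (\sum_(k < R) a m k * (c k * Ub k)) = - ('i * mu) * Ub m) :
  (\sum_(k < R) a n k * (c k * U k)) * (\sum_(k < R) a n k * (c k * Ub k)) =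
  \sum_(m < R) a n m ^+ 2 * (c m ^+ 2 * U m * Ub m
                   + c n * c m * (U n * Ub m + Ub n * U m)).
Proof.
have hm := main c U Ub n; cbv zeta in hm; rewrite hm.
rewrite -big_split /= big1 ?add0r // => m _; rewrite h1 h2; ring.
Qed.

Lemma cM (z w : C) : (z * w)^* = z^* * w^*. Proof. exact: rmorphM. Qed.
Lemma cS (F : 'I_R -> C) : (\sum_(k < R) F k)^* = \sum_(k < R) (F k)^*.
Proof. exact: rmorph_sum. Qed.

Lemma keyB (c : 'I_R -> C) (hcr : forall i, c i \is Num.real)
  (u : 'cV[C]_R) (mu : C) (hmu : mu \is Num.real)
  (he : matB x c *m u = ('i * mu) *: u) (n : 'I_R) :
       mu ^+ 2 * `|u n 0| ^+ 2 =
       \sum_(m < R) (matA x m n) ^+ 2 *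
          (c n ^+ 2 * c m ^+ 2 * `|u m 0| ^+ 2
           + 2 * c n ^+ 3 * c m * 'Re (u n 0 * (u m 0)^*)).
Proof.
have h1 m : c m * (\sum_(k < R) a m k * (c k * u k 0)) = 'i * mu * u m 0.
  have := congr1 (fun M : 'M[C]_(R,1) => M m 0) he; rewrite [in RHS]mxE => <-.
  rewrite !mxE mulr_sumr; apply: eq_bigr => k _; rewrite !mxE; ring.
have h2 m : c m * (\sum_(k < R) a m k * (c k * (u k 0)^*)) = - ('i * mu) * (u m 0)^*.
  have := congr1 (fun z => z^*) (h1 m); rewrite /= !cM cS conjCi.
  rewrite (conj_Creal (hcr m)) (conj_Creal hmu) => h; rewrite -mulNr -h; congr (_ * _); apply: eq_bigr => k _.
  by rewrite !cM (conj_Creal (hcr k)) (conj_Creal (a_real m k)).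
have e : ('i * mu * u n 0) * (- ('i * mu) * (u n 0)^*) = mu ^+ 2 * `|u n 0| ^+ 2.
  rewrite normCK; transitivity (- ('i ^+ 2) * (mu ^+ 2 * (u n 0 * (u n 0)^*))); first by ring.
  by rewrite sqrCi opprK mul1r.
rewrite -e -h1 -h2 (_ : _ * _ = c n ^+ 2 * ((\sum_(k < R) a n k * (c k * u k 0)) *
   (\sum_(k < R) a n k * (c k * (u k 0)^*)))); last by ring.
rewrite (@main2 c (fun k => u k 0) (fun k => (u k 0)^*) mu n h1 h2) mulr_sumr.
apply: eq_bigr => m _ /=.
rewrite !normCK ReE cM conjCK (a_anti m n) sqrrN.
have h2n : (2%:R : C) != 0 by rewrite pnatr_eq0.
field.
by [].
Qed.
End K.

Theorem lemma5 (C : numClosedFieldType) (R : nat) (hR : (0 < R)%N)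
  (x c : 'I_R -> C)
  (hxr : forall i, x i \is Num.real) (hcr : forall i, c i \is Num.real)
  (hinj : injective x) :
  (forall (u : 'cV[C]_R) (mu : C), mu \is Num.real ->
     is_eigenvector (matA x) u ('i * mu) ->
     forall n : 'I_R,
       mu ^+ 2 * `|u n 0| ^+ 2 =
       \sum_(m < R) (matA x m n) ^+ 2 *
          (`|u m 0| ^+ 2 + 2 * 'Re (u n 0 * (u m 0)^*)))
  /\
  (forall (u : 'cV[C]_R) (mu : C), mu \is Num.real ->
     is_eigenvector (matB x c) u ('i * mu) ->
     forall n : 'I_R,
       mu ^+ 2 * `|u n 0| ^+ 2 =
       \sum_(m < R) (matA x m n) ^+ 2 *
          (c n ^+ 2 * c m ^+ 2 * `|u m 0| ^+ 2
           + 2 * c n ^+ 3 * c m * 'Re (u n 0 * (u m 0)^*))).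
Proof.
split.
- move=> u mu hmu [_ he] n.
  have hAB : matA x = matB x (fun _ => 1).
    by apply/matrixP => i j; rewrite [RHS]mxE !mul1r.
  rewrite hAB in he.
  have h1r : forall i : 'I_R, (fun _ => 1 : C) i \is Num.real by move=> i; exact: real1.
  rewrite (@keyB C R x hxr hinj _ h1r u mu hmu he n); apply: eq_bigr => m _.
  by rewrite !expr1n !mul1r !mulr1.
- move=> u mu hmu [_ he] n; exact: (@keyB C R x hxr hinj c hcr u mu hmu he n).
Qed.
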